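(* Let $d'$ be a positive integer and $\varepsilon,\gamma\in(0,1)$ with $d'\ge\left(\frac12\left\lceil\frac{1}{2\varepsilon+\gamma}\right\rceil\right)^{1/\gamma}$, and let $p$ be the smallest prime larger than ${d'}^{2\varepsilon+\gamma}$. Then for every vector $\mathbf{x}'\in\mathbb{R}^{d'}$ with at most ${d'}^{\varepsilon}$ non-zero entries there exists $h_\star\in\mathcal H_{d',2\varepsilon+\gamma}$ such that $h_\star(i)\ne h_\star(j)$ for all $i\ne j$ with $x'_i\ne0\ne x'_j$.
   Context: For $d'$ and $\varepsilon'>0$: let $p$ be the smallest prime larger than ${d'}^{\varepsilon'}$ and $n=\lceil 1/\varepsilon'\rceil$; for $i\in[d']$ let $\mathrm{base}_p(i)\in\{0,\dots,p-1\}^n$ be the $n$-digit base-$p$ representation of $i$, with $j$-th digit $\mathrm{base}_p(i)_j$. For $a\in[p]$ define $h_a:[d']\to[p]$ by $h_a(i)=a+\sum_{j=1}^n a^j\,\mathrm{base}_p(i)_j \bmod p$, and $\mathcal H_{d',\varepsilon'}=\{h_a: a\in[p]\}$. Here $\varepsilon'=2\varepsilon+\gamma$. *)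

(* Defs.v *)
From HB Require Import structures.
From mathcomp Require Import all_boot all_order all_algebra.
From mathcomp Require Import all_classical all_reals all_analysis.

Import Order.TTheory GRing.Theory Num.Theory.
Local Open Scope ring_scope.

Definition ceil_nat (R : realType) (t : R) : nat := `|Num.ceil t|%N.

Definition smallest_prime_above (R : realType) (p : nat) (t : R) : Prop :=
  [/\ prime p, t < p%:R & forall q : nat, prime q -> t < q%:R -> (p <= q)%N].

Definition base_digit (p k j : nat) : nat := (k %/ p ^ j.-1) %% p.

(* h_a : [d] -> [p], h_a(i) = a + sum_{j=1}^n a^j base_p(i)_j mod p,
   with n = ceil(1/eps'), [d] = {1..d} encoded as i : 'I_d standing for i+1. *)
Definition hashH (R : realType) (d : nat) (eps' : R) (p a : nat) : 'I_d -> nat :=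
  fun i => ((a + \sum_(1 <= j < (ceil_nat R (1 / eps')).+1)
                 a ^ j * base_digit p i.+1 j) %% p)%N.

(* Membership in the family H_{d,eps'} = { h_a : a in [p] } where p is
   (supplied as) the smallest prime above d^eps'. *)
Definition in_hfam (R : realType) (d : nat) (eps' : R) (p : nat)
  (h : 'I_d -> nat) : Prop :=
  exists2 a : nat, (a < p)%N & h = hashH R d eps' p a.

(* Main.v *)
Require Import Defs.
From HB Require Import structures.
From mathcomp Require Import all_boot all_order all_algebra.
From mathcomp Require Import all_classical all_reals all_analysis.
From mathcomp Require Import zify lra.
Import Order.TTheory GRing.Theory Num.Theory.
Local Open Scope ring_scope.

Lemma ceil_nat_ge {R : realType} (t : R) : 0 < t -> t <= (ceil_nat R t)%:R.
Proof.
move=> t0; rewrite /ceil_nat natr_absz.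
have c0 : (0 <= Num.ceil t)%R by rewrite ceil_ge0 (lt_trans _ t0) // ltrN10.
rewrite ger0_norm //; exact: ceil_ge.
Qed.

Lemma digits_inj (p n m1 m2 : nat) : (1 < p)%N -> (m1 < p ^ n)%N -> (m2 < p ^ n)%N ->
  (forall j, (j < n)%N -> m1 %/ p ^ j %% p = m2 %/ p ^ j %% p)%N -> m1 = m2.
Proof.
move=> p1; elim: n m1 m2 => [|n IH] m1 m2.
  by rewrite expn0 !ltnS !leqn0 => /eqP -> /eqP ->.
move=> h1 h2 H.
rewrite (divn_eq m1 p) (divn_eq m2 p).
have H0 := H 0%N isT; rewrite !expn0 !divn1 in H0.
rewrite H0; congr (_ * _ + _)%N; apply: IH.
- by rewrite ltn_divLR ?(ltnW p1) // mulnC -expnS.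
- by rewrite ltn_divLR ?(ltnW p1) // mulnC -expnS.
move=> j jn; have := H j.+1 jn; rewrite expnS !divnMA; exact.
Qed.

Lemma real_bounds (R : realType) (d : nat) (eps gam : R) (p k : nat) :
  (0 < d)%N -> 0 < eps < 1 -> 0 < gam < 1 ->
  (2^-1 * (ceil_nat R (1 / (2 * eps + gam)))%:R) `^ (1 / gam) <= d%:R ->
  d%:R `^ (2 * eps + gam) < p%:R ->
  k%:R <= d%:R `^ eps ->
  ((ceil_nat R (1 / (2 * eps + gam))) * (k * k) < 2 * p)%N /\
  (d < p ^ (ceil_nat R (1 / (2 * eps + gam))))%N.
Proof.
set n := ceil_nat R _ => d0 /andP[e0 e1] /andP[g0 g1] Hn Hp Hk.
have D1 : 1 <= d%:R :> R by rewrite ler1n.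
have D0 : 0 < d%:R :> R by rewrite ltr0n.
have ep0 : 0 < 2 * eps + gam by lra.
have nge := @ceil_nat_ge R _ (divr_gt0 (@ltr01 R) ep0).
rewrite -/n in nge.
split.
- have h1 : 2^-1 * n%:R <= d%:R `^ gam.
    have := ge0_ler_powR (ltW g0) _ _ Hn.
    rewrite -powRrM mul1r mulVf ?gt_eqF // powRr1; last first.
      by rewrite mulr_ge0 // invr_ge0 ler0n.
    apply; rewrite nnegrE ?powR_ge0 //.
  have h2 : (k * k)%:R <= d%:R `^ (2 * eps) :> R.
    rewrite natrM mulr2n mulrDl mul1r powRD; last by apply/implyP => _; exact: lt0r_neq0 D0.
    by apply: (ler_pM _ _ Hk Hk); rewrite ler0n.
  rewrite -(ltr_nat R) !natrM.
  have h3 : d%:R `^ gam * d%:R `^ (2 * eps) = d%:R `^ (2 * eps + gam) :> R.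
    by rewrite addrC powRD //; apply/implyP => _; exact: lt0r_neq0 D0.
  have : n%:R * (k * k)%:R <= 2 * (d%:R `^ gam * d%:R `^ (2 * eps)) :> R.
    rewrite mulrA; apply: ler_pM => //; try by rewrite ler0n.
    lra.
  rewrite h3 natrM => h4; lra.
- rewrite -(ltr_nat R) natrX.
  have ge1 : 1 <= (2 * eps + gam) * n%:R.
    by rewrite -ler_pdivrMl // mulrC.
  apply: (le_lt_trans (y := d%:R `^ ((2 * eps + gam) * n%:R))).
    by rewrite -{1}(powRr1 (ltW D0)); apply: ler_powR.
  rewrite powRrM powR_mulrn ?powR_ge0 // ltrXn2r ?powR_ge0 //.
  rewrite -lt0n; have : (0 < n%:R :> R) by apply: lt_le_trans nge; exact: divr_gt0.
  by rewrite ltr0n.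
Qed.

Definition pairsA {d : nat} (S : {set 'I_d}) : {set 'I_d * 'I_d} :=
  [set ij : 'I_d * 'I_d | [&& (ij.1 < ij.2)%N, ij.1 \in S & ij.2 \in S]].

Lemma pairs_card {d : nat} (S : {set 'I_d}) :
  (2 * #|pairsA S| <= #|S| * #|S|)%N.
Proof.
set A := pairsA S.
pose sw := fun ij : 'I_d * 'I_d => (ij.2, ij.1).
have swi : injective sw by move=> [a b] [c e] [-> ->].
set B := sw @: A.
have cB : #|B| = #|A| by rewrite card_imset.
have AB0 : A :&: B = finset.set0.
  apply/setP => -[a b]; rewrite !inE; apply/negP => /andP[].
  rewrite /= => /and3P[ab _ _] /imsetP[[c e]]; rewrite !inE /= => /and3P[ce _ _] [] ab' be'; subst. lia.
have sub : A :|: B \subset finset.setX S S.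
  apply/fintype.subsetP => -[a b]; rewrite !inE /= => /orP[/and3P[_ -> ->] //|].
  move=> /imsetP[[c e]]; rewrite !inE /= => /and3P[_ ? ?] [] ab' be'; subst.
  by apply/andP.
have := subset_leq_card sub; rewrite cardsX.
have := cardsUI A B; rewrite AB0 cards0 addn0 cB => ->.
by rewrite mul2n addnn.
Qed.

Lemma hash_eval (R : realType) (d : nat) (e : R) (p a : nat) (i : 'I_d) :
  prime p ->
  ((hashH R d e p a i)%:R : 'F_p) = (a%:R : 'F_p) +
     \sum_(l < ceil_nat R (1 / e)) (a%:R : 'F_p) ^+ l.+1 * (base_digit p i.+1 l.+1)%:R.
Proof.
move=> pp; rewrite /hashH Fp_nat_mod // natrD; congr (_ + _).
rewrite big_add1 /= big_mkord natr_sum; apply: eq_bigr => l _.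
by rewrite natrM natrX.
Qed.

Definition Qpoly (p n : nat) (ij : nat * nat) : {poly 'F_p} :=
  \poly_(l < n.+1) (if l == 0%N then 0 else
     (base_digit p ij.1 l)%:R - (base_digit p ij.2 l)%:R).

Lemma Qpoly_eval (p n : nat) (ij : nat * nat) (al : 'F_p) :
  (Qpoly p n ij).[al] = \sum_(l < n) al ^+ l.+1 * (base_digit p ij.1 l.+1)%:R
                      - \sum_(l < n) al ^+ l.+1 * (base_digit p ij.2 l.+1)%:R.
Proof.
rewrite /Qpoly horner_poly big_ord_recl /= mul0r add0r -sumrB.
by apply: eq_bigr => l _; rewrite /bump /= add1n mulrBl !(mulrC _ (al ^+ _)).
Qed.

Lemma Qpoly_neq0 (p n m1 m2 : nat) : prime p -> (m1 < p ^ n)%N -> (m2 < p ^ n)%N ->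
  m1 != m2 -> Qpoly p n (m1, m2) != 0.
Proof.
move=> pp h1 h2; apply: contra => /eqP Q0; apply/eqP.
apply: (@digits_inj p n m1 m2 (prime_gt1 pp) h1 h2) => j jn.
have := congr1 (fun q : {poly 'F_p} => q`_j.+1) Q0.
rewrite coef_poly coef0 ltnS jn /= => /eqP; rewrite subr_eq0 => /eqP E.
have := congr1 (@nat_of_ord _) E; rewrite !val_Fp_nat // /base_digit !modn_mod //.
Qed.

Lemma arith1 (c s n p : nat) : (n * c < p)%N -> (s <= c * n.+1)%N -> (s.+1 - c <= p)%N.
Proof. nia. Qed.

Theorem lemmaF9 (R : realType) (d : nat) (eps gam : R) (p : nat) :
  (0 < d)%N ->
  0 < eps < 1 -> 0 < gam < 1 ->
  (2^-1 * (ceil_nat R (1 / (2 * eps + gam)))%:R) `^ (1 / gam) <= d%:R ->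
  smallest_prime_above R p (d%:R `^ (2 * eps + gam)) ->
  forall x : 'I_d -> R,
    (#|[set i | x i != 0]|)%:R <= d%:R `^ eps ->
    exists h : 'I_d -> nat,
      in_hfam R d (2 * eps + gam) p h /\
      (forall i j : 'I_d, i != j -> x i != 0 -> x j != 0 -> h i != h j).
Proof.
move=> d0 He Hg Hn [pp Hp _] x Hk.
set S := [set i | x i != 0] in Hk.
have [Hcnt Hpn] := @real_bounds R d eps gam p #|S| d0 He Hg Hn Hp Hk.
set n := ceil_nat R _ in Hcnt Hpn.
have Hc2 := pairs_card S.
have HnA : (n * #|pairsA S| < p)%N.
  have : (n * (2 * #|pairsA S|) <= n * (#|S| * #|S|))%N by rewrite leq_mul2l Hc2 orbT.
  nia.
pose Q := fun ij : 'I_d * 'I_d => Qpoly p n ((ij.1 : nat).+1, (ij.2 : nat).+1).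
have Qnz : forall ij, ij \in pairsA S -> Q ij != 0.
  move=> [i j]; rewrite inE /= => /and3P[ij _ _]; apply: Qpoly_neq0 => //.
  - by apply: leq_ltn_trans Hpn; exact: ltn_ord.
  - by apply: leq_ltn_trans Hpn; exact: ltn_ord.
  - by rewrite eqSS neq_ltn ij.
pose P := \prod_(ij in pairsA S) Q ij.
have Pnz : P != 0 by apply/prodf_neq0.
have Psz : (size P <= p)%N.
  rewrite /P size_prod //.
  apply: (@arith1 _ _ _ _ HnA).
  rewrite -sum_nat_const; apply: leq_sum => ij _; exact: size_poly.
have [a Pa] : exists a : 'I_p, P.[(a : nat)%:R] != 0.
  case/boolP: [exists a : 'I_p, P.[(a : nat)%:R] != 0] => [/existsP //|/existsPn H].
  pose rs := map (fun a : 'I_p => ((a : nat)%:R : 'F_p)) (enum 'I_p).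
  have := @max_poly_roots _ P rs Pnz.
  have -> : all (root P) rs.
    by apply/allP => r /mapP[b _ ->]; have := H b; rewrite negbK.
  have -> : uniq rs.
    rewrite map_inj_uniq ?enum_uniq // => b c /(congr1 (@nat_of_ord _)).
    by rewrite !val_Fp_nat // !modn_small // => /val_inj.
  rewrite size_map size_enum_ord => /(_ isT isT) h; by move: h; rewrite ltnNge Psz.
exists (hashH R d (2 * eps + gam) p a); split; first by exists a.
have key : forall i j : 'I_d, (i < j)%N -> i \in S -> j \in S ->
    hashH R d (2 * eps + gam) p a i != hashH R d (2 * eps + gam) p a j.
  move=> i j ij iS jS.
  have ijA : (i, j) \in pairsA S by rewrite inE /= ij iS jS.
  have : (Q (i, j)).[(a : nat)%:R] != 0.
    by move: Pa; rewrite /P horner_prod => /prodf_neq0; apply.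
  move=> Hne; apply/negP => /eqP E.
  have e : ((hashH R d (2 * eps + gam) p a i)%:R : 'F_p) - (hashH R d (2 * eps + gam) p a j)%:R
     = (Q (i, j)).[(a : nat)%:R].
    by rewrite /Q Qpoly_eval /= !hash_eval // opprD addrACA subrr add0r.
  by move: Hne; rewrite -e E subrr eqxx.
move=> i j nij xi xj.
have iS : i \in S by rewrite inE.
have jS : j \in S by rewrite inE.
case: (ltngtP i j) => [lt|gt|eq].
- exact: key.
- by rewrite eq_sym; apply: key.
- by move: nij; rewrite (val_inj eq) eqxx.
Qed.
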